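(* Let $K$ be an algebraically closed field of characteristic $2$ and let $X=\{a_1\sigma_1^4+a_2\sigma_1^2\sigma_2+a_3\sigma_1\sigma_3+a_4\sigma_4+\beta\sigma_2^2=0\}\subset\mathbb{P}^3_K$ be a normal symmetric quartic. Then no singular point of $X$ has four pairwise distinct coordinates. Moreover, up to permutation of coordinates: - $(0,0,1,1)\in\mathrm{Sing}(X)$ iff $\beta=0$; - $(0,0,0,1)\in\mathrm{Sing}(X)$ iff $a_1=a_2=0$; - for $b\neq1$: $(1,1,1,b)\in\mathrm{Sing}(X)$ iff $a_4=a_2(1+b)^2$ and $\beta=a_1(1+b)^2+a_2+a_3$; - $(1,1,1,1)\in\mathrm{Sing}(X)$ iff $a_4=0$; - for $b\neq0,1$: $(0,0,1,b)\in\mathrm{Sing}(X)$ iff $a_2=a_3=0$ and $a_1(1+b)^4+\beta b^2=0$; - for $z\neq0,1$: $(0,1,1,z)\in\mathrm{Sing}(X)$ iff $a_3=za_2$, $a_4=z^2a_2$ and $\beta=a_1z^4+a_2z^2(1+z)$; - for $b,c\notin\{0,1\}$ with $b\neq c$, setting $z=b+c$: $(1,1,b,c)\in\mathrm{Sing}(X)$ iff $a_3=za_2$, $a_4=z^2a_2$ and $\beta(1+bc)^2+a_1z^4+a_2z^2(1+z)=0$. *)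

(* Defs.v *)
From HB Require Import structures.
From mathcomp Require Import all_boot all_order all_algebra.
From mathcomp Require Import mpoly.
Set Implicit Arguments. Unset Strict Implicit. Unset Printing Implicit Defensive.
Import GRing.Theory.
Local Open Scope ring_scope.

Definition symquartic (K : fieldType) (a1 a2 a3 a4 beta : K) : {mpoly K[4]} :=
  a1 *: (mesym 4 K 1) ^+ 4
  + a2 *: ((mesym 4 K 1) ^+ 2 * mesym 4 K 2)
  + a3 *: (mesym 4 K 1 * mesym 4 K 3)
  + a4 *: mesym 4 K 4
  + beta *: (mesym 4 K 2) ^+ 2.

(* A (representative in K^4 of a) point of P^3: a nonzero vector. *)
Definition nonzero_pt (K : fieldType) (v : {ffun 'I_4 -> K}) : Prop :=
  exists i, v i != 0.

Definition sing_pt (K : fieldType) (F : {mpoly K[4]}) (v : {ffun 'I_4 -> K}) : Prop :=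
  nonzero_pt v /\ F.@[v] = 0 /\ forall i : 'I_4, (F^`M(i)).@[v] = 0.

(* Normality of the quartic surface {F = 0} in P^3: for a hypersurface
   (Cohen-Macaulay, so S2 holds) normality is equivalent to R1, i.e. to the
   singular locus being finite (a finite set of points of P^3). *)
Definition normal_surface (K : fieldType) (F : {mpoly K[4]}) : Prop :=
  exists s : seq {ffun 'I_4 -> K},
    forall v, sing_pt F v -> exists2 w, w \in s & exists c : K, forall i, v i = c * w i.

Definition pt4 (K : fieldType) (x0 x1 x2 x3 : K) : {ffun 'I_4 -> K} :=
  [ffun i : 'I_4 => nth 0 [:: x0; x1; x2; x3] i].

(* Main.v *)
Require Import Defs.
From HB Require Import structures.
From mathcomp Require Import all_boot all_order all_algebra.
From mathcomp Require Import mpoly.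
From mathcomp Require Import ring.
Import GRing.Theory.
Local Open Scope ring_scope.
Set Implicit Arguments. Unset Strict Implicit. Unset Printing Implicit Defensive.

Lemma mwidenXU (K : comRingType) n (i : 'I_n) : mwiden ('X_i : {mpoly K[n]}) = 'X_(widen_ord (leqnSn n) i).
Proof. by rewrite mwidenX mnmwiden1. Qed.

Definition o0 : 'I_4 := @Ordinal 4 0 isT.
Definition o1 : 'I_4 := @Ordinal 4 1 isT.
Definition o2 : 'I_4 := @Ordinal 4 2 isT.
Definition o3 : 'I_4 := @Ordinal 4 3 isT.

Lemma ms1 (K : comRingType) : mesym 4 K 1 = 'X_o0 + 'X_o1 + 'X_o2 + 'X_o3.
Proof.
rewrite mesym1E !big_ord_recr big_ord0 /= add0r.
by congr (_ + _ + _ + _); congr 'X_ _; apply/val_inj.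
Qed.

Lemma ms4 (K : comRingType) : mesym 4 K 4 = 'X_o0 * 'X_o1 * 'X_o2 * 'X_o3.
Proof.
rewrite mesymnnE !big_ord_recr big_ord0 /= mul1r.
by congr (_ * _ * _ * _); congr 'X_ _; apply/val_inj.
Qed.

Lemma eo0 : widen_ord (leqnSn 3) (widen_ord (leqnSn 2) (widen_ord (leqnSn 1) (ord_max : 'I_1))) = o0.
Proof. exact/val_inj. Qed.
Lemma eo1 : widen_ord (leqnSn 3) (widen_ord (leqnSn 2) (ord_max : 'I_2)) = o1.
Proof. exact/val_inj. Qed.
Lemma eo2 : widen_ord (leqnSn 3) (ord_max : 'I_3) = o2.
Proof. exact/val_inj. Qed.
Lemma eo3 : (ord_max : 'I_4) = o3.
Proof. exact/val_inj. Qed.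

Lemma ms2 (K : comRingType) : mesym 4 K 2 =
  'X_o0 * 'X_o1 + 'X_o0 * 'X_o2 + 'X_o0 * 'X_o3 + 'X_o1 * 'X_o2 + 'X_o1 * 'X_o3 + 'X_o2 * 'X_o3.
Proof.
rewrite (mesymSS K 3 1) (mesymSS K 2 1) (mesymSS K 1 1).
rewrite mesym_geqnE // !mesym1E !big_ord_recr !big_ord0 /=.
rewrite !(mwiden0, mwidenD, mwidenM, mwidenXU, add0r, mul0r).
rewrite eo0 eo1 eo2 eo3; ring.
Qed.

Lemma ms3 (K : comRingType) : mesym 4 K 3 =
  'X_o0 * 'X_o1 * 'X_o2 + 'X_o0 * 'X_o1 * 'X_o3 + 'X_o0 * 'X_o2 * 'X_o3 + 'X_o1 * 'X_o2 * 'X_o3.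
Proof.
rewrite (mesymSS K 3 2) (mesymSS K 2 2) (mesymSS K 2 1) (mesymSS K 1 1) (mesymSS K 1 2).
rewrite !mesym1E (@mesym_geqnE 1 K 2) // (@mesym_geqnE 1 K 3) // !big_ord_recr !big_ord0 /=.
rewrite !(mwiden0, mwidenD, mwidenM, mwidenXU, add0r, mul0r).
rewrite eo0 eo1 eo2 eo3; ring.
Qed.

Lemma mderivXU (K : comRingType) n (i j : 'I_n) :
  ('X_j : {mpoly K[n]})^`M(i) = ((j == i)%:R : {mpoly K[n]}).
Proof.
rewrite mderivX mnm1E; case: eqP => [->|_]; last by rewrite scale0r.
have -> : (U_(i) - U_(i) = 0)%MM by apply/mnmP=> k; rewrite mnmBE mnm0E subnn.
by rewrite mpolyX0 scale1r.
Qed.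

Definition S1 (K : fieldType) (v : {ffun 'I_4 -> K}) := v o0 + v o1 + v o2 + v o3.
Definition S2 (K : fieldType) (v : {ffun 'I_4 -> K}) :=
  v o0 * v o1 + v o0 * v o2 + v o0 * v o3 + v o1 * v o2 + v o1 * v o3 + v o2 * v o3.
Definition S3 (K : fieldType) (v : {ffun 'I_4 -> K}) :=
  v o0 * v o1 * v o2 + v o0 * v o1 * v o3 + v o0 * v o2 * v o3 + v o1 * v o2 * v o3.
Definition S4 (K : fieldType) (v : {ffun 'I_4 -> K}) := v o0 * v o1 * v o2 * v o3.

Lemma evalF (K : fieldType) (a1 a2 a3 a4 beta : K) (v : {ffun 'I_4 -> K}) :
  (symquartic a1 a2 a3 a4 beta).@[v] =
  a1 * S1 v ^+ 4 + a2 * (S1 v ^+ 2 * S2 v) + a3 * (S1 v * S3 v) + a4 * S4 v + beta * S2 v ^+ 2.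
Proof.
rewrite /symquartic ms1 ms2 ms3 ms4.
by rewrite !(mevalD, mevalZ, mevalM, rmorphXn, mevalXU).
Qed.


Lemma evalD_gen (K : fieldType) (a1 a2 a3 a4 beta : K) (v : {ffun 'I_4 -> K}) i :
  let x := v i in
  let P2 := S1 v - x in let P3 := S2 v - x * P2 in let P4 := S3 v - x * P3 in
  ((symquartic a1 a2 a3 a4 beta)^`M(i)).@[v] =
  a1 * (4%:R * S1 v ^+ 3) + a2 * (2%:R * S1 v * S2 v + S1 v ^+ 2 * P2)
  + a3 * (S3 v + S1 v * P3) + a4 * P4 + beta * (2%:R * S2 v * P2).
Proof.
move=> x P2 P3 P4.
have e4 : forall p : {mpoly K[4]}, p ^+ 4 = p * (p * (p * p)).
  by move=> p; rewrite !exprS expr0 mulr1.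
rewrite /symquartic ms1 ms2 ms3 ms4 e4 !expr2.
rewrite !(mderivD, mderivZ, mderivM, mderivXU).
rewrite !(mevalD, mevalZ, mevalM, rmorphMn, meval1, mevalXU).
rewrite {}/P4 {}/P3 {}/P2 {}/x /S1 /S2 /S3 /S4.
case: i => [[|[|[|[|//]]]] Hi].
- have -> : Ordinal Hi = o0 by apply/val_inj.
  rewrite /= ?eqxx /= !meval1; ring.
- have -> : Ordinal Hi = o1 by apply/val_inj.
  rewrite /= ?eqxx /= !meval1; ring.
- have -> : Ordinal Hi = o2 by apply/val_inj.
  rewrite /= ?eqxx /= !meval1; ring.
- have -> : Ordinal Hi = o3 by apply/val_inj.
  rewrite /= ?eqxx /= !meval1; ring.
Qed.


Definition FE (K : fieldType) (a1 a2 a3 a4 beta s1 s2 s3 s4 : K) :=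
  a1 * s1 ^+ 4 + a2 * (s1 ^+ 2 * s2) + a3 * (s1 * s3) + a4 * s4 + beta * s2 ^+ 2.
Definition Hc (K : fieldType) (a2 a3 a4 s1 s2 s3 x : K) :=
  a2 * (s1 ^+ 2 * (s1 + x)) + a3 * (s3 + s1 * (s2 + x * (s1 + x)))
  + a4 * (s3 + x * (s2 + x * (s1 + x))).
Definition e2f (K : fieldType) (x0 x1 x2 x3 : K) :=
  x0 * x1 + x0 * x2 + x0 * x3 + x1 * x2 + x1 * x3 + x2 * x3.
Definition e3f (K : fieldType) (x0 x1 x2 x3 : K) :=
  x0 * x1 * x2 + x0 * x1 * x3 + x0 * x2 * x3 + x1 * x2 * x3.

Lemma c2_eq (K : fieldType) (h2 : (2%:R : K) = 0) (e1 e2 q : K) :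
  e1 = e2 + 2%:R * q -> e1 = e2.
Proof. by rewrite h2 mul0r addr0. Qed.

Lemma c2_opp (K : fieldType) (h2 : (2%:R : K) = 0) (x : K) : - x = x.
Proof. by apply: (c2_eq h2 (q := - x)); ring. Qed.

Lemma c2_xx (K : fieldType) (h2 : (2%:R : K) = 0) (x : K) : x + x = 0.
Proof. by apply: (c2_eq h2 (q := x)); ring. Qed.

Lemma c2_add0 (K : fieldType) (h2 : (2%:R : K) = 0) (x y : K) : x + y = 0 <-> x = y.
Proof.
split=> [h|->]; last exact: c2_xx.
by rewrite -[y](c2_opp h2); apply/eqP; rewrite -addr_eq0; apply/eqP.
Qed.

Lemma evalD (K : fieldType) (a1 a2 a3 a4 beta : K) (v : {ffun 'I_4 -> K}) i :
  (2%:R : K) = 0 ->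
  ((symquartic a1 a2 a3 a4 beta)^`M(i)).@[v] = Hc a2 a3 a4 (S1 v) (S2 v) (S3 v) (v i).
Proof.
move=> h2; rewrite evalD_gen /=.
have h4 : (4%:R : K) = 0 by rewrite -[4%N]/(2 * 2)%N natrM h2 mul0r.
rewrite h4 h2 !(c2_opp h2) /Hc; ring.
Qed.

Lemma pt4_0 (K : fieldType) (x0 x1 x2 x3 : K) : pt4 x0 x1 x2 x3 o0 = x0.
Proof. by rewrite ffunE. Qed.
Lemma pt4_1 (K : fieldType) (x0 x1 x2 x3 : K) : pt4 x0 x1 x2 x3 o1 = x1.
Proof. by rewrite ffunE. Qed.
Lemma pt4_2 (K : fieldType) (x0 x1 x2 x3 : K) : pt4 x0 x1 x2 x3 o2 = x2.
Proof. by rewrite ffunE. Qed.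
Lemma pt4_3 (K : fieldType) (x0 x1 x2 x3 : K) : pt4 x0 x1 x2 x3 o3 = x3.
Proof. by rewrite ffunE. Qed.

Lemma forallI4 (P : 'I_4 -> Prop) : (forall i, P i) <-> P o0 /\ P o1 /\ P o2 /\ P o3.
Proof.
split; first by move=> H; do !split; apply: H.
move=> [H0 [H1 [H2 H3]]] [[|[|[|[|//]]]] Hi].
- by have -> : Ordinal Hi = o0 by apply/val_inj.
- by have -> : Ordinal Hi = o1 by apply/val_inj.
- by have -> : Ordinal Hi = o2 by apply/val_inj.
- by have -> : Ordinal Hi = o3 by apply/val_inj.
Qed.

Lemma sing_iff (K : fieldType) (a1 a2 a3 a4 beta : K) (v : {ffun 'I_4 -> K}) :
  (2%:R : K) = 0 ->
  sing_pt (symquartic a1 a2 a3 a4 beta) v <->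
  nonzero_pt v /\ FE a1 a2 a3 a4 beta (S1 v) (S2 v) (S3 v) (S4 v) = 0 /\
  forall i, Hc a2 a3 a4 (S1 v) (S2 v) (S3 v) (v i) = 0.
Proof.
move=> h2; rewrite /sing_pt evalF.
split=> [[nz [hF hD]]|[nz [hF hD]]]; (do !split) => // i.
  by rewrite -(evalD a1 a2 a3 a4 beta v i h2).
by rewrite (evalD a1 a2 a3 a4 beta v i h2).
Qed.

Lemma sing_pt4 (K : fieldType) (a1 a2 a3 a4 beta : K) (x0 x1 x2 x3 : K) :
  (2%:R : K) = 0 ->
  sing_pt (symquartic a1 a2 a3 a4 beta) (pt4 x0 x1 x2 x3) <->
  nonzero_pt (pt4 x0 x1 x2 x3) /\
  FE a1 a2 a3 a4 beta (x0 + x1 + x2 + x3) (e2f x0 x1 x2 x3) (e3f x0 x1 x2 x3)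
     (x0 * x1 * x2 * x3) = 0 /\
  Hc a2 a3 a4 (x0 + x1 + x2 + x3) (e2f x0 x1 x2 x3) (e3f x0 x1 x2 x3) x0 = 0 /\
  Hc a2 a3 a4 (x0 + x1 + x2 + x3) (e2f x0 x1 x2 x3) (e3f x0 x1 x2 x3) x1 = 0 /\
  Hc a2 a3 a4 (x0 + x1 + x2 + x3) (e2f x0 x1 x2 x3) (e3f x0 x1 x2 x3) x2 = 0 /\
  Hc a2 a3 a4 (x0 + x1 + x2 + x3) (e2f x0 x1 x2 x3) (e3f x0 x1 x2 x3) x3 = 0.
Proof.
move=> h2; rewrite sing_iff // forallI4 /S1 /S2 /S3 /S4 !pt4_0 !pt4_1 !pt4_2 !pt4_3.
exact: iff_refl.
Qed.
Lemma P1F (K : fieldType) (a1 a2 a3 a4 beta : K) (h2 : (2%:R : K) = 0) :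
  FE a1 a2 a3 a4 beta (0 + 0 + 1 + 1) (e2f 0 0 1 1) (e3f 0 0 1 1) (0 * 0 * 1 * 1) =
  beta.
Proof. apply: (c2_eq h2 (q := ((8%:R * a1) + (2%:R * a2)))); rewrite /FE /e2f /e3f; ring. Qed.

Lemma P1H0 (K : fieldType) (a2 a3 a4 : K) (h2 : (2%:R : K) = 0) :
  Hc a2 a3 a4 (0 + 0 + 1 + 1) (e2f 0 0 1 1) (e3f 0 0 1 1) 0 =
  0.
Proof. apply: (c2_eq h2 (q := ((4%:R * a2) + (a3)))); rewrite /Hc /e2f /e3f; ring. Qed.

Lemma P1H1 (K : fieldType) (a2 a3 a4 : K) (h2 : (2%:R : K) = 0) :
  Hc a2 a3 a4 (0 + 0 + 1 + 1) (e2f 0 0 1 1) (e3f 0 0 1 1) 1 =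
  0.
Proof. apply: (c2_eq h2 (q := ((6%:R * a2) + (4%:R * a3) + (2%:R * a4)))); rewrite /Hc /e2f /e3f; ring. Qed.

Lemma P2F (K : fieldType) (a1 a2 a3 a4 beta : K) (h2 : (2%:R : K) = 0) :
  FE a1 a2 a3 a4 beta (0 + 0 + 0 + 1) (e2f 0 0 0 1) (e3f 0 0 0 1) (0 * 0 * 0 * 1) =
  a1.
Proof. apply: (c2_eq h2 (q := 0)); rewrite /FE /e2f /e3f; ring. Qed.

Lemma P2H0 (K : fieldType) (a2 a3 a4 : K) (h2 : (2%:R : K) = 0) :
  Hc a2 a3 a4 (0 + 0 + 0 + 1) (e2f 0 0 0 1) (e3f 0 0 0 1) 0 =
  a2.
Proof. apply: (c2_eq h2 (q := 0)); rewrite /Hc /e2f /e3f; ring. Qed.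

Lemma P2H1 (K : fieldType) (a2 a3 a4 : K) (h2 : (2%:R : K) = 0) :
  Hc a2 a3 a4 (0 + 0 + 0 + 1) (e2f 0 0 0 1) (e3f 0 0 0 1) 1 =
  0.
Proof. apply: (c2_eq h2 (q := ((a2) + (a3) + (a4)))); rewrite /Hc /e2f /e3f; ring. Qed.

Lemma P3F (K : fieldType) (a1 a2 a3 a4 beta : K) (b : K) (h2 : (2%:R : K) = 0) :
  FE a1 a2 a3 a4 beta (1 + 1 + 1 + b) (e2f 1 1 1 b) (e3f 1 1 1 b) (1 * 1 * 1 * b) =
  (1 + b) ^+ 2 * (beta + (a1 * (1 + b) ^+ 2 + a2 + a3)) + b * (a4 + a2 * (1 + b) ^+ 2).
Proof. apply: (c2_eq h2 (q := ((40%:R * a1) + (52%:R * a1 * b) + (24%:R * a1 * b ^+ 2) + (4%:R * a1 * b ^+ 3) + (13%:R * a2) + (21%:R * a2 * b) + (9%:R * a2 * b ^+ 2) + (a2 * b ^+ 3) + (a3) + (4%:R * a3 * b) + (a3 * b ^+ 2) + (8%:R * b * beta) + (4%:R * b ^+ 2 * beta) + (4%:R * beta)))); rewrite /FE /e2f /e3f; ring. Qed.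

Lemma P3H1 (K : fieldType) (a2 a3 a4 : K) (b : K) (h2 : (2%:R : K) = 0) :
  Hc a2 a3 a4 (1 + 1 + 1 + b) (e2f 1 1 1 b) (e3f 1 1 1 b) 1 =
  b * (a4 + a2 * (1 + b) ^+ 2).
Proof. apply: (c2_eq h2 (q := ((18%:R * a2) + (16%:R * a2 * b) + (4%:R * a2 * b ^+ 2) + (11%:R * a3) + (11%:R * a3 * b) + (2%:R * a3 * b ^+ 2) + (4%:R * a4) + (3%:R * a4 * b)))); rewrite /Hc /e2f /e3f; ring. Qed.

Lemma P3Hb (K : fieldType) (a2 a3 a4 : K) (b : K) (h2 : (2%:R : K) = 0) :
  Hc a2 a3 a4 (1 + 1 + 1 + b) (e2f 1 1 1 b) (e3f 1 1 1 b) b =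
  a4 + a2 * (1 + b) ^+ 2.
Proof. apply: (c2_eq h2 (q := ((13%:R * a2) + (17%:R * a2 * b) + (7%:R * a2 * b ^+ 2) + (a2 * b ^+ 3) + (5%:R * a3) + (12%:R * a3 * b) + (6%:R * a3 * b ^+ 2) + (a3 * b ^+ 3) + (3%:R * a4 * b) + (3%:R * a4 * b ^+ 2) + (a4 * b ^+ 3)))); rewrite /Hc /e2f /e3f; ring. Qed.

Lemma P4F (K : fieldType) (a1 a2 a3 a4 beta : K) (h2 : (2%:R : K) = 0) :
  FE a1 a2 a3 a4 beta (1 + 1 + 1 + 1) (e2f 1 1 1 1) (e3f 1 1 1 1) (1 * 1 * 1 * 1) =
  a4.
Proof. apply: (c2_eq h2 (q := ((128%:R * a1) + (48%:R * a2) + (8%:R * a3) + (18%:R * beta)))); rewrite /FE /e2f /e3f; ring. Qed.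

Lemma P4H1 (K : fieldType) (a2 a3 a4 : K) (h2 : (2%:R : K) = 0) :
  Hc a2 a3 a4 (1 + 1 + 1 + 1) (e2f 1 1 1 1) (e3f 1 1 1 1) 1 =
  a4.
Proof. apply: (c2_eq h2 (q := ((40%:R * a2) + (24%:R * a3) + (7%:R * a4)))); rewrite /Hc /e2f /e3f; ring. Qed.

Lemma P5F (K : fieldType) (a1 a2 a3 a4 beta : K) (b : K) (h2 : (2%:R : K) = 0) :
  FE a1 a2 a3 a4 beta (0 + 0 + 1 + b) (e2f 0 0 1 b) (e3f 0 0 1 b) (0 * 0 * 1 * b) =
  (a1 * (1 + b) ^+ 4 + beta * b ^+ 2) + a2 * ((1 + b) ^+ 2 * b).
Proof. apply: (c2_eq h2 (q := 0)); rewrite /FE /e2f /e3f; ring. Qed.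

Lemma P5H0 (K : fieldType) (a2 a3 a4 : K) (b : K) (h2 : (2%:R : K) = 0) :
  Hc a2 a3 a4 (0 + 0 + 1 + b) (e2f 0 0 1 b) (e3f 0 0 1 b) 0 =
  (1 + b) * (a2 * (1 + b) ^+ 2 + a3 * b).
Proof. apply: (c2_eq h2 (q := 0)); rewrite /Hc /e2f /e3f; ring. Qed.

Lemma P5H1 (K : fieldType) (a2 a3 a4 : K) (b : K) (h2 : (2%:R : K) = 0) :
  Hc a2 a3 a4 (0 + 0 + 1 + b) (e2f 0 0 1 b) (e3f 0 0 1 b) 1 =
  a2 * ((1 + b) ^+ 2 * b).
Proof. apply: (c2_eq h2 (q := ((a2) + (2%:R * a2 * b) + (a2 * b ^+ 2) + (a3) + (2%:R * a3 * b) + (a3 * b ^+ 2) + (a4) + (a4 * b)))); rewrite /Hc /e2f /e3f; ring. Qed.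

Lemma P5Hb (K : fieldType) (a2 a3 a4 : K) (b : K) (h2 : (2%:R : K) = 0) :
  Hc a2 a3 a4 (0 + 0 + 1 + b) (e2f 0 0 1 b) (e3f 0 0 1 b) b =
  a2 * (1 + b) ^+ 2.
Proof. apply: (c2_eq h2 (q := ((a2 * b) + (2%:R * a2 * b ^+ 2) + (a2 * b ^+ 3) + (a3 * b) + (2%:R * a3 * b ^+ 2) + (a3 * b ^+ 3) + (a4 * b ^+ 2) + (a4 * b ^+ 3)))); rewrite /Hc /e2f /e3f; ring. Qed.

Lemma P6F (K : fieldType) (a1 a2 a3 a4 beta : K) (z : K) (h2 : (2%:R : K) = 0) :
  FE a1 a2 a3 a4 beta (0 + 1 + 1 + z) (e2f 0 1 1 z) (e3f 0 1 1 z) (0 * 1 * 1 * z) =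
  (beta + (a1 * z ^+ 4 + a2 * z ^+ 2 * (1 + z))) + z ^+ 2 * (a3 + z * a2).
Proof. apply: (c2_eq h2 (q := ((8%:R * a1) + (16%:R * a1 * z) + (12%:R * a1 * z ^+ 2) + (4%:R * a1 * z ^+ 3) + (2%:R * a2) + (6%:R * a2 * z) + (4%:R * a2 * z ^+ 2) + (a3 * z) + (2%:R * beta * z) + (2%:R * beta * z ^+ 2)))); rewrite /FE /e2f /e3f; ring. Qed.

Lemma P6H0 (K : fieldType) (a2 a3 a4 : K) (z : K) (h2 : (2%:R : K) = 0) :
  Hc a2 a3 a4 (0 + 1 + 1 + z) (e2f 0 1 1 z) (e3f 0 1 1 z) 0 =
  z * (a4 + z ^+ 2 * a2).
Proof. apply: (c2_eq h2 (q := ((4%:R * a2) + (6%:R * a2 * z) + (3%:R * a2 * z ^+ 2) + (a3) + (3%:R * a3 * z) + (a3 * z ^+ 2)))); rewrite /Hc /e2f /e3f; ring. Qed.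

Lemma P6H1 (K : fieldType) (a2 a3 a4 : K) (z : K) (h2 : (2%:R : K) = 0) :
  Hc a2 a3 a4 (0 + 1 + 1 + z) (e2f 0 1 1 z) (e3f 0 1 1 z) 1 =
  z * (z + 1) * (a3 + z * a2).
Proof. apply: (c2_eq h2 (q := ((6%:R * a2) + (8%:R * a2 * z) + (3%:R * a2 * z ^+ 2) + (4%:R * a3) + (5%:R * a3 * z) + (a3 * z ^+ 2) + (2%:R * a4) + (2%:R * a4 * z)))); rewrite /Hc /e2f /e3f; ring. Qed.

Lemma P6Hz (K : fieldType) (a2 a3 a4 : K) (z : K) (h2 : (2%:R : K) = 0) :
  Hc a2 a3 a4 (0 + 1 + 1 + z) (e2f 0 1 1 z) (e3f 0 1 1 z) z =
  0.
Proof. apply: (c2_eq h2 (q := ((4%:R * a2) + (8%:R * a2 * z) + (5%:R * a2 * z ^+ 2) + (a2 * z ^+ 3) + (a3) + (5%:R * a3 * z) + (4%:R * a3 * z ^+ 2) + (a3 * z ^+ 3) + (a4 * z) + (2%:R * a4 * z ^+ 2) + (a4 * z ^+ 3)))); rewrite /Hc /e2f /e3f; ring. Qed.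

Lemma P7F (K : fieldType) (a1 a2 a3 a4 beta : K) (b : K) (c : K) (h2 : (2%:R : K) = 0) :
  FE a1 a2 a3 a4 beta (1 + 1 + b + c) (e2f 1 1 b c) (e3f 1 1 b c) (1 * 1 * b * c) =
  (beta * (1 + b * c) ^+ 2 + a1 * (b + c) ^+ 4 + a2 * (b + c) ^+ 2 * (1 + (b + c))) + (b + c) ^+ 2 * (a3 + (b + c) * a2) + b * c * (a4 + (b + c) ^+ 2 * a2).
Proof. apply: (c2_eq h2 (q := ((8%:R * a1) + (16%:R * a1 * b) + (24%:R * a1 * b * c) + (12%:R * a1 * b * c ^+ 2) + (12%:R * a1 * b ^+ 2) + (12%:R * a1 * b ^+ 2 * c) + (4%:R * a1 * b ^+ 3) + (16%:R * a1 * c) + (12%:R * a1 * c ^+ 2) + (4%:R * a1 * c ^+ 3) + (2%:R * a2) + (6%:R * a2 * b) + (10%:R * a2 * b * c) + (2%:R * a2 * b * c ^+ 2) + (4%:R * a2 * b ^+ 2) + (2%:R * a2 * b ^+ 2 * c) + (6%:R * a2 * c) + (4%:R * a2 * c ^+ 2) + (a3 * b) + (2%:R * a3 * b * c) + (a3 * b * c ^+ 2) + (a3 * b ^+ 2 * c) + (a3 * c) + (2%:R * b * beta) + (4%:R * b * beta * c) + (2%:R * b * beta * c ^+ 2) + (2%:R * b ^+ 2 * beta) + (2%:R * b ^+ 2 * beta * c) + (2%:R * beta * c) + (2%:R * beta * c ^+ 2)))); rewrite /FE /e2f /e3f; ring. Qed.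

Lemma P7H1 (K : fieldType) (a2 a3 a4 : K) (b : K) (c : K) (h2 : (2%:R : K) = 0) :
  Hc a2 a3 a4 (1 + 1 + b + c) (e2f 1 1 b c) (e3f 1 1 b c) 1 =
  (b + c) * (1 + b * c + (b + c)) * (a3 + (b + c) * a2) + b * c * (a4 + (b + c) ^+ 2 * a2).
Proof. apply: (c2_eq h2 (q := ((6%:R * a2) + (8%:R * a2 * b) + (6%:R * a2 * b * c) + - (a2 * b * c ^+ 3) + (3%:R * a2 * b ^+ 2) + - (2%:R * a2 * b ^+ 2 * c ^+ 2) + - (a2 * b ^+ 3 * c) + (8%:R * a2 * c) + (3%:R * a2 * c ^+ 2) + (4%:R * a3) + (5%:R * a3 * b) + (4%:R * a3 * b * c) + (a3 * b ^+ 2) + (5%:R * a3 * c) + (a3 * c ^+ 2) + (2%:R * a4) + (2%:R * a4 * b) + (a4 * b * c) + (2%:R * a4 * c)))); rewrite /Hc /e2f /e3f; ring. Qed.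

Lemma P7Hb (K : fieldType) (a2 a3 a4 : K) (b : K) (c : K) (h2 : (2%:R : K) = 0) :
  Hc a2 a3 a4 (1 + 1 + b + c) (e2f 1 1 b c) (e3f 1 1 b c) b =
  c * (a4 + (b + c) ^+ 2 * a2).
Proof. apply: (c2_eq h2 (q := ((4%:R * a2) + (8%:R * a2 * b) + (8%:R * a2 * b * c) + (a2 * b * c ^+ 2) + (5%:R * a2 * b ^+ 2) + (2%:R * a2 * b ^+ 2 * c) + (a2 * b ^+ 3) + (6%:R * a2 * c) + (3%:R * a2 * c ^+ 2) + (a3) + (5%:R * a3 * b) + (6%:R * a3 * b * c) + (a3 * b * c ^+ 2) + (4%:R * a3 * b ^+ 2) + (2%:R * a3 * b ^+ 2 * c) + (a3 * b ^+ 3) + (3%:R * a3 * c) + (a3 * c ^+ 2) + (a4 * b) + (2%:R * a4 * b * c) + (2%:R * a4 * b ^+ 2) + (a4 * b ^+ 2 * c) + (a4 * b ^+ 3)))); rewrite /Hc /e2f /e3f; ring. Qed.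

Lemma P7Hc (K : fieldType) (a2 a3 a4 : K) (b : K) (c : K) (h2 : (2%:R : K) = 0) :
  Hc a2 a3 a4 (1 + 1 + b + c) (e2f 1 1 b c) (e3f 1 1 b c) c =
  b * (a4 + (b + c) ^+ 2 * a2).
Proof. apply: (c2_eq h2 (q := ((4%:R * a2) + (6%:R * a2 * b) + (8%:R * a2 * b * c) + (2%:R * a2 * b * c ^+ 2) + (3%:R * a2 * b ^+ 2) + (a2 * b ^+ 2 * c) + (8%:R * a2 * c) + (5%:R * a2 * c ^+ 2) + (a2 * c ^+ 3) + (a3) + (3%:R * a3 * b) + (6%:R * a3 * b * c) + (2%:R * a3 * b * c ^+ 2) + (a3 * b ^+ 2) + (a3 * b ^+ 2 * c) + (5%:R * a3 * c) + (4%:R * a3 * c ^+ 2) + (a3 * c ^+ 3) + (2%:R * a4 * b * c) + (a4 * b * c ^+ 2) + (a4 * c) + (2%:R * a4 * c ^+ 2) + (a4 * c ^+ 3)))); rewrite /Hc /e2f /e3f; ring. Qed.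


Lemma c2_neq (K : fieldType) (h2 : (2%:R : K) = 0) (x y : K) : x != y -> x + y != 0.
Proof. by move=> hxy; apply/eqP => /(c2_add0 h2) e; rewrite e eqxx in hxy. Qed.

Lemma claimP1 (K : fieldType) (a1 a2 a3 a4 beta : K) : (2%:R : K) = 0 ->
  sing_pt (symquartic a1 a2 a3 a4 beta) (pt4 0 0 1 1) <-> beta = 0.
Proof.
move=> h2; rewrite sing_pt4 // P1F // P1H0 // P1H1 //.
split=> [[_ [-> _]] //| ->]; split; last by do !split.
by exists o2; rewrite pt4_2 oner_neq0.
Qed.

Lemma claimP2 (K : fieldType) (a1 a2 a3 a4 beta : K) : (2%:R : K) = 0 ->
  sing_pt (symquartic a1 a2 a3 a4 beta) (pt4 0 0 0 1) <-> a1 = 0 /\ a2 = 0.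
Proof.
move=> h2; rewrite sing_pt4 // P2F // P2H0 // P2H1 //.
split=> [[_ [-> [-> _]]] //| [-> ->]]; split; last by do !split.
by exists o3; rewrite pt4_3 oner_neq0.
Qed.

Lemma claimP3 (K : fieldType) (a1 a2 a3 a4 beta : K) (b : K) : (2%:R : K) = 0 -> b != 1 ->
  sing_pt (symquartic a1 a2 a3 a4 beta) (pt4 1 1 1 b) <->
  a4 = a2 * (1 + b) ^+ 2 /\ beta = a1 * (1 + b) ^+ 2 + a2 + a3.
Proof.
move=> h2 hb1.
have ht : 1 + b != 0 by apply: c2_neq; rewrite // eq_sym.
rewrite sing_pt4 // P3F // P3H1 // P3Hb //.
split=> [[_ [hF [_ [_ [_ hd]]]]]|[ha4 hbe]].
  split; first exact/(c2_add0 h2).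
  move: hF; rewrite hd mulr0 addr0 => /eqP; rewrite mulf_eq0 expf_eq0 (negbTE ht) andbF /=.
  by move=> /eqP /(c2_add0 h2).
split; first by exists o0; rewrite pt4_0 oner_neq0.
by rewrite ha4 hbe !(c2_xx h2) !mulr0 addr0.
Qed.

Lemma claimP4 (K : fieldType) (a1 a2 a3 a4 beta : K) : (2%:R : K) = 0 ->
  sing_pt (symquartic a1 a2 a3 a4 beta) (pt4 1 1 1 1) <-> a4 = 0.
Proof.
move=> h2; rewrite sing_pt4 // P4F // P4H1 //.
split=> [[_ [-> _]] //| ->]; split; last by do !split.
by exists o0; rewrite pt4_0 oner_neq0.
Qed.

Lemma claimP5 (K : fieldType) (a1 a2 a3 a4 beta : K) (b : K) : (2%:R : K) = 0 ->
  b != 0 -> b != 1 ->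
  sing_pt (symquartic a1 a2 a3 a4 beta) (pt4 0 0 1 b) <->
  a2 = 0 /\ a3 = 0 /\ a1 * (1 + b) ^+ 4 + beta * b ^+ 2 = 0.
Proof.
move=> h2 hb0 hb1.
have ht : 1 + b != 0 by apply: c2_neq; rewrite // eq_sym.
rewrite sing_pt4 // P5F // P5H0 // P5H1 // P5Hb //.
split=> [[_ [hF [h0 [_ [_ hbb]]]]] | [ha2 [ha3 hF]]].
  have ha2 : a2 = 0.
    by move: hbb => /eqP; rewrite mulf_eq0 expf_eq0 (negbTE ht) andbF orbF => /eqP.
  move: h0; rewrite ha2 mul0r add0r => /eqP.
  rewrite !mulf_eq0 (negbTE ht) (negbTE hb0) /= orbF => /eqP ha3.
  by move: hF; rewrite ha2 !mul0r addr0.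
split; first by exists o2; rewrite pt4_2 oner_neq0.
by rewrite ha2 ha3 hF !(mul0r, mulr0, add0r, addr0).
Qed.

Lemma claimP6 (K : fieldType) (a1 a2 a3 a4 beta : K) (z : K) : (2%:R : K) = 0 ->
  z != 0 -> z != 1 ->
  sing_pt (symquartic a1 a2 a3 a4 beta) (pt4 0 1 1 z) <->
  a3 = z * a2 /\ a4 = z ^+ 2 * a2 /\ beta = a1 * z ^+ 4 + a2 * z ^+ 2 * (1 + z).
Proof.
move=> h2 hz0 hz1.
have hz1' : z + 1 != 0 by apply: c2_neq.
rewrite sing_pt4 // P6F // P6H0 // P6H1 // P6Hz //.
split=> [[_ [hF [h0 [h1 _]]]] | [ha3 [ha4 hbe]]].
  have d3 : a3 + z * a2 = 0.
    by move: h1 => /eqP; rewrite !mulf_eq0 (negbTE hz0) (negbTE hz1') /= => /eqP.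
  have d4 : a4 + z ^+ 2 * a2 = 0.
    by move: h0 => /eqP; rewrite mulf_eq0 (negbTE hz0) /= => /eqP.
  move: hF; rewrite d3 mulr0 addr0 => /(c2_add0 h2) he.
  by split; [exact/(c2_add0 h2) | split; [exact/(c2_add0 h2) | exact he]].
split; first by exists o1; rewrite pt4_1 oner_neq0.
by rewrite ha3 ha4 hbe !(c2_xx h2) !mulr0 !addr0.
Qed.

Lemma claimP7 (K : fieldType) (a1 a2 a3 a4 beta : K) (b c : K) : (2%:R : K) = 0 ->
  b != 0 -> b != 1 -> c != 0 -> c != 1 -> b != c ->
  sing_pt (symquartic a1 a2 a3 a4 beta) (pt4 1 1 b c) <->
  a3 = (b + c) * a2 /\ a4 = (b + c) ^+ 2 * a2 /\
  beta * (1 + b * c) ^+ 2 + a1 * (b + c) ^+ 4 + a2 * (b + c) ^+ 2 * (1 + (b + c)) = 0.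
Proof.
move=> h2 hb0 hb1 hc0 hc1 hbc.
have hbc' : b + c != 0 by apply: c2_neq.
have hm : 1 + b * c + (b + c) != 0.
  have -> : 1 + b * c + (b + c) = (1 + b) * (1 + c) by ring.
  by rewrite mulf_neq0 // c2_neq // eq_sym.
rewrite sing_pt4 // P7F // P7H1 // P7Hb // P7Hc //.
split=> [[_ [hF [h1 [_ [hb' _]]]]] | [ha3 [ha4 he]]].
  have d4 : a4 + (b + c) ^+ 2 * a2 = 0.
    by move: hb' => /eqP; rewrite mulf_eq0 (negbTE hc0) /= => /eqP.
  have d3 : a3 + (b + c) * a2 = 0.
    move: h1; rewrite d4 mulr0 addr0 => /eqP.
    by rewrite !mulf_eq0 (negbTE hbc') (negbTE hm) /= => /eqP.
  move: hF; rewrite d3 d4 !mulr0 !addr0 => he.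
  by split; [exact/(c2_add0 h2) | split; [exact/(c2_add0 h2) | exact he]].
split; first by exists o0; rewrite pt4_0 oner_neq0.
by rewrite ha3 ha4 he !(c2_xx h2) !mulr0 !addr0.
Qed.


Lemma exists_notin (K : closedFieldType) (s : seq K) : exists t, t \notin s.
Proof.
pose p := (\prod_(a <- s) ('X - a%:P)) * 'X + (1 : K)%:P.
have : size p != 1%N by rewrite /p size_MXaddC oner_eq0 andbF size_prod_XsubC.
move/closed_rootP => [t ht]; exists t; apply/negP => ts.
move: ht; rewrite /root /p hornerMXaddC.
have /rootP -> : root (\prod_(a <- s) ('X - a%:P)) t by rewrite root_prod_XsubC.
by rewrite mul0r add0r oner_eq0.
Qed.

Lemma no_family (K : closedFieldType) (F : {mpoly K[4]}) :
  normal_surface F ->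
  (forall t : K, exists v, sing_pt F v /\ v o0 = 1 /\ v o1 = t) -> False.
Proof.
move=> [s Hs] fam.
have [t ht] := exists_notin [seq w o1 / w o0 | w : {ffun 'I_4 -> K} <- s].
have [v [sv [v0 v1]]] := fam t.
have [w ws [c hc]] := Hs v sv.
have e0 := hc o0; have e1 := hc o1; rewrite v0 in e0; rewrite v1 in e1.
have w0 : w o0 != 0.
  by apply/eqP => h; move: e0; rewrite h mulr0 => /eqP; rewrite oner_eq0.
move/negP: ht; apply; apply/mapP; exists w => //.
apply: (mulIf w0); rewrite divfK // e1 mulrAC -e0 mul1r //.
Qed.

Lemma famB (K : closedFieldType) (a1 a2 a3 a4 beta : K) : (2%:R : K) = 0 ->
  a3 = 0 -> a4 = 0 ->
  forall t : K, exists v, sing_pt (symquartic a1 a2 a3 a4 beta) v /\ v o0 = 1 /\ v o1 = t.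
Proof.
move=> h2 ha3 ha4 t.
have [u hu] := @solve_monicpoly K 2 (nth 0 [:: -(1 + t + t ^+ 2); -(1 + t)]) isT.
rewrite !big_ord_recl big_ord0 /= in hu.
have hq : u ^+ 2 + (1 + t) * u + (1 + t + t ^+ 2) = 0 by rewrite hu; ring.
exists (pt4 1 t u (1 + t + u)); rewrite pt4_0 pt4_1; split => //.
rewrite sing_pt4 //.
have es1 : 1 + t + u + (1 + t + u) = 0 := c2_xx h2 _.
have es2 : e2f 1 t u (1 + t + u) = 0.
  rewrite -hq; apply: (c2_eq h2 (q := t + t * u + u)); rewrite /e2f; ring.
rewrite es1 es2 ha3 ha4; split; first by exists o0; rewrite pt4_0 oner_neq0.
by rewrite /FE /Hc; do !split; ring.
Qed.

Lemma famC (K : closedFieldType) (a1 a2 a3 a4 beta : K) : (2%:R : K) = 0 ->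
  a4 = 0 -> beta = 0 ->
  forall t : K, exists v, sing_pt (symquartic a1 a2 a3 a4 beta) v /\ v o0 = 1 /\ v o1 = t.
Proof.
move=> h2 ha4 hbe t.
exists (pt4 1 t 1 t); rewrite pt4_0 pt4_1; split => //.
rewrite sing_pt4 //.
have es1 : 1 + t + 1 + t = 0 by apply: (c2_eq h2 (q := 1 + t)); ring.
have es3 : e3f 1 t 1 t = 0 by apply: (c2_eq h2 (q := t + t ^+ 2)); rewrite /e3f; ring.
rewrite es1 es3 ha4 hbe; split; first by exists o0; rewrite pt4_0 oner_neq0.
by rewrite /FE /Hc; do !split; ring.
Qed.

Lemma cubic_step (K : fieldType) (c3 c2 c1 c0 x y : K) :
  c3 * x ^+ 3 + c2 * x ^+ 2 + c1 * x + c0 = 0 ->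
  c3 * y ^+ 3 + c2 * y ^+ 2 + c1 * y + c0 = 0 -> x != y ->
  c3 * (x ^+ 2 + x * y + y ^+ 2) + c2 * (x + y) + c1 = 0.
Proof.
move=> fx fy nxy.
have E : (x - y) * (c3 * (x ^+ 2 + x * y + y ^+ 2) + c2 * (x + y) + c1) =
  (c3 * x ^+ 3 + c2 * x ^+ 2 + c1 * x + c0) - (c3 * y ^+ 3 + c2 * y ^+ 2 + c1 * y + c0).
  by ring.
move: E; rewrite fx fy subrr => /eqP; rewrite mulf_eq0 subr_eq0 (negbTE nxy) /=.
by move/eqP.
Qed.

Lemma cubic_step2 (K : fieldType) (c3 c2 c1 x y z : K) :
  c3 * (x ^+ 2 + x * y + y ^+ 2) + c2 * (x + y) + c1 = 0 ->
  c3 * (x ^+ 2 + x * z + z ^+ 2) + c2 * (x + z) + c1 = 0 -> y != z ->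
  c3 * (x + y + z) + c2 = 0.
Proof.
move=> fy fz nyz.
have E : (y - z) * (c3 * (x + y + z) + c2) =
  (c3 * (x ^+ 2 + x * y + y ^+ 2) + c2 * (x + y) + c1)
  - (c3 * (x ^+ 2 + x * z + z ^+ 2) + c2 * (x + z) + c1) by ring.
move: E; rewrite fy fz subrr => /eqP; rewrite mulf_eq0 subr_eq0 (negbTE nyz) /=.
by move/eqP.
Qed.

Lemma cubic4 (K : fieldType) (c3 c2 c1 c0 x0 x1 x2 x3 : K) :
  x0 != x1 -> x0 != x2 -> x0 != x3 -> x1 != x2 -> x1 != x3 -> x2 != x3 ->
  c3 * x0 ^+ 3 + c2 * x0 ^+ 2 + c1 * x0 + c0 = 0 ->
  c3 * x1 ^+ 3 + c2 * x1 ^+ 2 + c1 * x1 + c0 = 0 ->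
  c3 * x2 ^+ 3 + c2 * x2 ^+ 2 + c1 * x2 + c0 = 0 ->
  c3 * x3 ^+ 3 + c2 * x3 ^+ 2 + c1 * x3 + c0 = 0 ->
  [/\ c3 = 0, c2 = 0, c1 = 0 & c0 = 0].
Proof.
move=> n01 n02 n03 n12 n13 n23 f0 f1 f2 f3.
have g01 := cubic_step f0 f1 n01.
have g02 := cubic_step f0 f2 n02.
have g03 := cubic_step f0 f3 n03.
have k012 := cubic_step2 g01 g02 n12.
have k013 := cubic_step2 g01 g03 n13.
have E : (x2 - x3) * c3 = (c3 * (x0 + x1 + x2) + c2) - (c3 * (x0 + x1 + x3) + c2) by ring.
have hc3 : c3 = 0.
  by move: E; rewrite k012 k013 subrr => /eqP; rewrite mulf_eq0 subr_eq0 (negbTE n23) /= => /eqP.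
have hc2 : c2 = 0 by move: k012; rewrite hc3 mul0r add0r.
have hc1 : c1 = 0 by move: g01; rewrite hc3 hc2 !mul0r !add0r.
have hc0 : c0 = 0 by move: f0; rewrite hc3 hc2 hc1 !mul0r !add0r.
by [].
Qed.

Lemma claim1 (K : closedFieldType) (a1 a2 a3 a4 beta : K) : (2%:R : K) = 0 ->
  normal_surface (symquartic a1 a2 a3 a4 beta) ->
  forall v : {ffun 'I_4 -> K}, sing_pt (symquartic a1 a2 a3 a4 beta) v ->
     ~ (forall i j : 'I_4, i != j -> v i != v j).
Proof.
move=> h2 hN v /(sing_iff _ _ _ _ _ _ h2) [_ [hF hH]] hd.
have cub : forall x, Hc a2 a3 a4 (S1 v) (S2 v) (S3 v) x =
  a4 * x ^+ 3 + (a3 * S1 v + a4 * S1 v) * x ^+ 2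
  + (a2 * S1 v ^+ 2 + a3 * S1 v ^+ 2 + a4 * S2 v) * x
  + (a2 * S1 v ^+ 3 + a3 * (S3 v + S1 v * S2 v) + a4 * S3 v).
  by move=> x; rewrite /Hc; ring.
have f0 := hH o0; have f1 := hH o1; have f2 := hH o2; have f3 := hH o3.
rewrite cub in f0; rewrite cub in f1; rewrite cub in f2; rewrite cub in f3.
have [ha4 c2 c1 c0] := cubic4 (hd o0 o1 isT) (hd o0 o2 isT) (hd o0 o3 isT)
  (hd o1 o2 isT) (hd o1 o3 isT) (hd o2 o3 isT) f0 f1 f2 f3.
rewrite ha4 in c2 c1 c0 hF.
have [hs1|hs1] := eqVneq (S1 v) 0; last first.
  have ha3 : a3 = 0.
    by move: c2; rewrite mul0r addr0 => /eqP; rewrite mulf_eq0 (negbTE hs1) orbF => /eqP.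
  exact: (no_family hN (famB a1 a2 beta h2 ha3 ha4)).
have e3 : a3 * S3 v = 0 by rewrite -c0 hs1; ring.
have eb : beta * S2 v ^+ 2 = 0 by rewrite -hF /FE hs1; ring.
have [ha3|ha3] := eqVneq a3 0.
  exact: (no_family hN (famB a1 a2 beta h2 ha3 ha4)).
have hs3 : S3 v = 0 by move: e3 => /eqP; rewrite mulf_eq0 (negbTE ha3) /= => /eqP.
have [hbe|hbe] := eqVneq beta 0.
  exact: (no_family hN (famC a1 a2 a3 h2 ha4 hbe)).
have hs2 : S2 v = 0.
  by move: eb => /eqP; rewrite mulf_eq0 (negbTE hbe) /= expf_eq0 /= => /eqP.
have P0 : v o0 ^+ 4 = S1 v * v o0 ^+ 3 - S2 v * v o0 ^+ 2 + S3 v * v o0 - S4 v.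
  by rewrite /S1 /S2 /S3 /S4; ring.
have P1 : v o1 ^+ 4 = S1 v * v o1 ^+ 3 - S2 v * v o1 ^+ 2 + S3 v * v o1 - S4 v.
  by rewrite /S1 /S2 /S3 /S4; ring.
rewrite hs1 hs2 hs3 !mul0r !(subr0, addr0, sub0r) in P0 P1.
have E : (v o0 + v o1) ^+ 4 = 0.
  apply: (c2_eq h2 (q := 2%:R * v o0 * v o1 ^+ 3 + 3%:R * v o0 ^+ 2 * v o1 ^+ 2
     + 2%:R * v o0 ^+ 3 * v o1)).
  have -> : (v o0 + v o1) ^+ 4 = v o0 ^+ 4 + v o1 ^+ 4 + 2%:R * (2%:R * v o0 * v o1 ^+ 3
     + 3%:R * v o0 ^+ 2 * v o1 ^+ 2 + 2%:R * v o0 ^+ 3 * v o1) by ring.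
  by rewrite P0 P1 (c2_xx h2) add0r.
move: E => /eqP; rewrite expf_eq0 /= => /eqP /(c2_add0 h2) e01.
by move: (hd o0 o1 isT); rewrite e01 eqxx.
Qed.


Theorem proposition4p2 (K : closedFieldType) (a1 a2 a3 a4 beta : K) :
  2%N \in [pchar K] ->
  normal_surface (symquartic a1 a2 a3 a4 beta) ->
  let F := symquartic a1 a2 a3 a4 beta in
  (forall v : {ffun 'I_4 -> K}, sing_pt F v ->
     ~ (forall i j : 'I_4, i != j -> v i != v j)) /\
  (sing_pt F (pt4 0 0 1 1) <-> beta = 0) /\
  (sing_pt F (pt4 0 0 0 1) <-> a1 = 0 /\ a2 = 0) /\
  (forall b : K, b != 1 ->
     (sing_pt F (pt4 1 1 1 b) <->
        a4 = a2 * (1 + b) ^+ 2 /\ beta = a1 * (1 + b) ^+ 2 + a2 + a3)) /\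
  (sing_pt F (pt4 1 1 1 1) <-> a4 = 0) /\
  (forall b : K, b != 0 -> b != 1 ->
     (sing_pt F (pt4 0 0 1 b) <->
        a2 = 0 /\ a3 = 0 /\ a1 * (1 + b) ^+ 4 + beta * b ^+ 2 = 0)) /\
  (forall z : K, z != 0 -> z != 1 ->
     (sing_pt F (pt4 0 1 1 z) <->
        a3 = z * a2 /\ a4 = z ^+ 2 * a2 /\
        beta = a1 * z ^+ 4 + a2 * z ^+ 2 * (1 + z))) /\
  (forall b c : K, b != 0 -> b != 1 -> c != 0 -> c != 1 -> b != c ->
     let z := b + c in
     (sing_pt F (pt4 1 1 b c) <->
        a3 = z * a2 /\ a4 = z ^+ 2 * a2 /\
        beta * (1 + b * c) ^+ 2 + a1 * z ^+ 4 + a2 * z ^+ 2 * (1 + z) = 0)).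
Proof.
move=> hc hN F.
have h2 : (2%:R : K) = 0 := pcharf0 hc.
split; first exact: claim1.
split; first exact: claimP1.
split; first exact: claimP2.
split; first by move=> b hb; exact: claimP3.
split; first exact: claimP4.
split; first by move=> b hb0 hb1; exact: claimP5.
split; first by move=> z hz0 hz1; exact: claimP6.
by move=> b c hb0 hb1 hc0 hc1 hbc z; exact: claimP7.
Qed.
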